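(* Let $0<q<1$, $N\in\{\tfrac12,1,\tfrac32,2,\dots\}$, $n\in\{0,1,\dots,\lfloor N\rfloor\}$, and $\alpha\in\mathbb{C}$ with $\pm q\alpha, q^2\alpha^2\notin\{q^{-j}:j\in\mathbb{Z}_{\ge0}\}$. Then for all $x\in\mathbb{C}$: $${}_4\phi_3\!\left(\begin{matrix}q^{-2n-1},\alpha^2q^{2n+2},q^{-x-N-\frac12},-q^{x-N-\frac12}\\ q\alpha,-q\alpha,q^{-2N-1}\end{matrix};q,q\right)=\frac{q^{-x-N-\frac12}-q^{x-N-\frac12}}{1-q^{-2N-1}}\;{}_4\phi_3\!\left(\begin{matrix}q^{-2n},\alpha^2q^{2n+3},q^{-2x-2N-1},q^{2x-2N-1}\\ q^2\alpha^2,q^{-2N+1},q^{-2N}\end{matrix};q^2,q^2\right).$$ (Equivalently, $R_{2n+1}(q^{-x-N-\frac12}-q^{x-N-\frac12};\alpha,\alpha,q^{-2N-2},-1\,|\,q)=\frac{q^{-x-N-\frac12}-q^{x-N-\frac12}}{1-q^{-2N-1}}R_n(q^{-2x-2N-1}+q^{2x-2N-1};\alpha^2,q,q^{-2N-2},q^{-2N-2}\,|\,q^2)$.)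
   Context: $(x;q)_k=\prod_{j=0}^{k-1}(1-xq^j)$. ${}_4\phi_3\!\left(\begin{matrix}a_1,\dots,a_4\\ b_1,b_2,b_3\end{matrix};q,z\right)=\sum_{k\ge0}\frac{(a_1,\dots,a_4;q)_k}{(b_1,b_2,b_3,q;q)_k}z^k$, terminating here because of the numerator $q^{-2n-1}$ (base $q$) resp. $q^{-2n}$ (base $q^2$). $q$-Racah polynomials: $R_n(q^{-y}+\gamma\delta q^{y+1};\alpha,\beta,\gamma,\delta\,|\,q)={}_4\phi_3(q^{-n},\alpha\beta q^{n+1},q^{-y},\gamma\delta q^{y+1};\alpha q,\beta\delta q,\gamma q;q,q)$. *)

(* Defs.v *)
From HB Require Import structures.
From mathcomp Require Import all_boot all_order all_algebra all_field.
Set Implicit Arguments. Unset Strict Implicit. Unset Printing Implicit Defensive.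
Import Order.TTheory GRing.Theory Num.Theory.
Local Open Scope ring_scope.

Definition qpoch (C : numClosedFieldType) (x q : C) (k : nat) : C :=
  \prod_(j < k) (1 - x * q ^+ j).

(* Terminating basic hypergeometric series 4phi3 with base q and argument z,
   where the first numerator parameter is a1 = q^{-K}; the series then
   terminates and equals the finite sum over 0 <= k <= K. *)
Definition phi43 (C : numClosedFieldType) (a1 a2 a3 a4 b1 b2 b3 q z : C)
  (K : nat) : C :=
  \sum_(k < K.+1)
    (qpoch a1 q k * qpoch a2 q k * qpoch a3 q k * qpoch a4 q k)
    / (qpoch b1 q k * qpoch b2 q k * qpoch b3 q k * qpoch q q k) * z ^+ k.

(* Main.v *)
Require Import Defs.
From HB Require Import structures.
From mathcomp Require Import all_boot all_order all_algebra all_field.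
From mathcomp Require Import ring zify.
Import Order.TTheory GRing.Theory Num.Theory.
Local Open Scope ring_scope.

Module S1.

Section Aux.
Variable C : numClosedFieldType.

Lemma qpochSl (x y p : C) j : x * p = y -> qpoch x p j.+1 = (1 - x) * qpoch y p j.
Proof.
move=> <-; rewrite /qpoch big_ord_recl expr0 mulr1; congr (_ * _).
by apply: eq_bigr => i _; rewrite /bump /= exprS mulrA.
Qed.

Lemma qpochSr (x p : C) j : qpoch x p j.+1 = qpoch x p j * (1 - x * p ^+ j).
Proof. by rewrite /qpoch big_ord_recr. Qed.

Lemma qpoch0 (x p : C) : qpoch x p 0 = 1.
Proof. by rewrite /qpoch big_ord0. Qed.

Variables (q t a : C).
Hypotheses (q0 : q != 0) (t0 : t != 0).

Ltac fld := first [ring | field; repeat (apply/andP; split); rewrite ?expf_neq0 //].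


Definition phiL k z := qpoch (t / z) q k * qpoch (- (t * z)) q k.
Definition BB z := (1 - a ^+ 2 * q ^+ 2 * z ^+ 2 / t ^+ 2) * (1 - t ^+ 2 * z ^+ 2) * (1 + z ^+ 2 / q).
Definition DD z := q * (1 - z ^+ 2 / t ^+ 2) * (a ^+ 2 - t ^+ 2 * z ^+ 2 / q ^+ 2) * (1 + q * z ^+ 2).
Definition PP z := (1 + z ^+ 2 / q) * (1 + z ^+ 2) * (1 + q * z ^+ 2).
Definition Lop (f : C -> C) z := BB z * (f (q * z) - f z) + DD z * (f (z / q) - f z).
Definition muL k := (q ^+ k)^-1 * (1 - q ^+ k) * (1 - a ^+ 2 * q ^+ k * q).
Definition rhoL k := - (q ^+ k)^-1 * (1 - a ^+ 2 * (q ^+ k) ^+ 2) * (1 - t ^+ 2 * q ^+ k / q) * (1 - q ^+ k).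

Lemma T1 k z : z != 0 -> Lop (phiL k) z = PP z * (muL k * phiL k z + rhoL k * phiL k.-1 z).
Proof.
move=> z0; have qz0 : q * z != 0 by rewrite mulf_neq0.
case: k => [|[|j]].
- by rewrite /Lop /phiL /muL /rhoL !qpoch0 !expr0 !subrr; ring.
- rewrite /Lop /phiL /muL /rhoL /= !(qpochSl _ _ _ _ (erefl _)) !qpoch0 ?expr1 ?expr0.
  rewrite /BB /DD /PP; field; by rewrite ?q0 ?z0 ?t0.
set A := qpoch (t * q / z) q j; set B := qpoch (- (t * q * z)) q j.
have E1 : phiL j.+2 z = (1 - t/z) * A * (1 - t * q / z * q ^+ j) * ((1 + t * z) * B * (1 + t * q * z * q ^+ j)).
  rewrite /phiL (qpochSl (t/z) (t*q/z) q j.+1); last by fld.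
  rewrite (qpochSr (t*q/z) q j).
  rewrite (qpochSl (- (t * z)) (- (t * q * z)) q j.+1); last by ring.
  rewrite (qpochSr (- (t * q * z)) q j).
  rewrite /A /B; ring.
have E2 : phiL j.+2 (q * z) = (1 - t/(q*z)) * (1 - t/z) * A * (B * (1 + t * q * z * q ^+ j) * (1 + t * q * z * q ^+ j.+1)).
  rewrite /phiL (qpochSl (t/(q*z)) (t/z) q j.+1); last by fld.
  rewrite (qpochSl (t/z) (t*q/z) q j); last by fld.
  rewrite (qpochSr (- (t * (q * z))) q j.+1) (qpochSr (- (t * (q * z))) q j).
  rewrite /A /B (_ : t * (q * z) = t * q * z); last by ring.
  rewrite exprS; ring.
have E3 : phiL j.+2 (z / q) = A * (1 - t * q / z * q ^+ j) * (1 - t * q / z * q ^+ j.+1) * ((1 + t * z / q) * (1 + t * z) * B).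
  rewrite /phiL (qpochSr (t/(z/q)) q j.+1) (qpochSr (t/(z/q)) q j).
  rewrite (qpochSl (- (t * (z / q))) (- (t * z)) q j.+1); last by fld.
  rewrite (qpochSl (- (t * z)) (- (t * q * z)) q j); last by ring.
  rewrite /A /B (_ : t / (z / q) = t * q / z); last by fld.
  rewrite exprS; ring.
have E4 : phiL j.+1 z = (1 - t/z) * A * ((1 + t * z) * B).
  rewrite /phiL (qpochSl (t/z) (t*q/z) q j); last by fld.
  rewrite (qpochSl (- (t * z)) (- (t * q * z)) q j); last by ring.
  rewrite /A /B; ring.
rewrite /Lop E1 E2 E3 /= E4 /BB /DD /PP /muL /rhoL.
rewrite !exprS.
field; repeat (apply/andP; split); rewrite ?expf_neq0 //. all: match goal with |- ?g => idtac g end.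
Qed.

Definition ww (z : C) := z^-1 - z.
Definition psiR j z := ww z * (qpoch (t ^+ 2 / z ^+ 2) (q ^+ 2) j * qpoch (t ^+ 2 * z ^+ 2) (q ^+ 2) j).
Definition nuR j := (q * (q ^+ 2) ^+ j)^-1 * (1 - q * (q ^+ 2) ^+ j) * (1 - a ^+ 2 * q ^+ 2 * (q ^+ 2) ^+ j).
Definition sigR j := - (q * (q ^+ 2) ^+ j)^-1 * (1 - a ^+ 2 * (q ^+ 2) ^+ j) * (1 - t ^+ 2 * (q ^+ 2) ^+ j)
   * (1 - t ^+ 2 * (q ^+ 2) ^+ j / q) * (1 - (q ^+ 2) ^+ j).

Lemma T2 k z : z != 0 -> Lop (psiR k) z = PP z * (nuR k * psiR k z + sigR k * psiR k.-1 z).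
Proof.
move=> z0; have qz0 : q * z != 0 by rewrite mulf_neq0.
case: k => [|[|j]].
- rewrite /Lop /psiR /nuR /sigR /ww !qpoch0 !expr0 /BB /DD /PP; fld.
- rewrite /Lop /psiR /nuR /sigR /ww /= !(qpochSl _ _ _ _ (erefl _)) !qpoch0 ?expr1 ?expr0.
  rewrite /BB /DD /PP; fld.
set p := q ^+ 2.
set x := t ^+ 2 / z ^+ 2; set y := t ^+ 2 * z ^+ 2.
set A := qpoch (x * p) p j; set B := qpoch (y * p) p j.
have E1 : psiR j.+2 z = ww z * ((1 - x) * A * (1 - x * p * p ^+ j) * ((1 - y) * B * (1 - y * p * p ^+ j))).
  rewrite /psiR -/p -/x -/y (qpochSl x (x * p) p j.+1) // (qpochSr (x * p) p j).
  rewrite (qpochSl y (y * p) p j.+1) // (qpochSr (y * p) p j).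
  rewrite /A /B; ring.
have E2 : psiR j.+2 (q * z) = ww (q * z) * ((1 - x / p) * (1 - x) * A * (B * (1 - y * p * p ^+ j) * (1 - y * p * p ^+ j.+1))).
  rewrite /psiR -/p (qpochSl (t ^+ 2 / (q * z) ^+ 2) x p j.+1); last by rewrite /x /p; fld.
  rewrite (qpochSl x (x * p) p j) //.
  rewrite (_ : t ^+ 2 * (q * z) ^+ 2 = y * p); last by rewrite /y /p; ring.
  rewrite (qpochSr (y * p) p j.+1) (qpochSr (y * p) p j).
  rewrite /A /B (_ : t ^+ 2 / (q * z) ^+ 2 = x / p); last by rewrite /x /p; fld.
  rewrite exprS; ring.
have E3 : psiR j.+2 (z / q) = ww (z / q) * (A * (1 - x * p * p ^+ j) * (1 - x * p * p ^+ j.+1) * ((1 - y / p) * (1 - y) * B)).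
  rewrite /psiR -/p (_ : t ^+ 2 / (z / q) ^+ 2 = x * p); last by rewrite /x /p; fld.
  rewrite (qpochSr (x * p) p j.+1) (qpochSr (x * p) p j).
  rewrite (qpochSl (t ^+ 2 * (z / q) ^+ 2) y p j.+1); last by rewrite /y /p; fld.
  rewrite (qpochSl y (y * p) p j) //.
  rewrite /A /B (_ : t ^+ 2 * (z / q) ^+ 2 = y / p); last by rewrite /y /p; fld.
  rewrite exprS; ring.
have E4 : psiR j.+1 z = ww z * ((1 - x) * A * ((1 - y) * B)).
  rewrite /psiR -/p -/x -/y (qpochSl x (x * p) p j) // (qpochSl y (y * p) p j) //.
rewrite /Lop E1 E2 E3 /= E4 /BB /DD /PP /nuR /sigR -/p.
rewrite !(exprS p); set P := p ^+ j.
rewrite /p /x /y /ww.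
fld.
Qed.
End Aux.

End S1.
Import S1.

Module S2.

Ltac fld := first [ring | field; repeat (apply/andP; split); rewrite ?expf_neq0 //].

Section Tel.
Variable C : numClosedFieldType.

Lemma telesc (c mu rho phi : nat -> C) K :
  rho 0%N = 0 -> (forall k, (k < K)%N -> c k * (mu k - mu K) + c k.+1 * rho k.+1 = 0) ->
  \sum_(k < K.+1) c k * (mu k * phi k + rho k * phi k.-1) = mu K * \sum_(k < K.+1) c k * phi k.
Proof.
move=> r0 H; apply/eqP; rewrite -subr_eq0 mulr_sumr -sumrB.
rewrite (eq_bigr (fun k : 'I_K.+1 => c k * (mu k - mu K) * phi k + c k * rho k * phi k.-1));
  last by move=> k _; ring.
rewrite big_split /= big_ord_recr /= subrr mulr0 mul0r addr0.
rewrite big_ord_recl /= r0 mulr0 mul0r add0r -big_split /=.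
apply/eqP/big1 => k _; rewrite /bump /= add1n /= -mulrDl.
by rewrite (H _ (ltn_ord k)) mul0r.
Qed.

Variables (q t a : C).
Hypotheses (q0 : q != 0) (t0 : t != 0).
Local Notation Lop := (Lop C q t a).
Local Notation phiL := (phiL C q t).
Local Notation psiR := (psiR C q t).
Local Notation muL := (muL C q a).
Local Notation rhoL := (rhoL C q t a).
Local Notation nuR := (nuR C q a).
Local Notation sigR := (sigR C q t a).
Local Notation PP := (PP C q).

Lemma Lop_sum (c : nat -> C) (f : nat -> C -> C) N z :
  Lop (fun z => \sum_(k < N) c k * f k z) z = \sum_(k < N) c k * Lop (f k) z.
Proof.
elim: N => [|N IH]; first by rewrite /S1.Lop /= !big_ord0 !subrr !mulr0 addr0.
move: IH; rewrite /S1.Lop /= => IH.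
rewrite !big_ord_recr /= -IH; ring.
Qed.

Definition cL K k := qpoch (q ^- K) q k * qpoch (a ^+ 2 * q ^+ K.+1) q k /
  (qpoch (q * a) q k * qpoch (- (q * a)) q k * qpoch (t ^+ 2) q k * qpoch q q k) * q ^+ k.
Definition FL K z := \sum_(k < K.+1) cL K k * phiL k z.

Lemma condL K k : (k < K)%N -> 1 - q * a * q ^+ k != 0 -> 1 - - (q * a) * q ^+ k != 0 ->
  1 - t ^+ 2 * q ^+ k != 0 -> 1 - q * q ^+ k != 0 ->
  cL K k * (muL k - muL K) + cL K k.+1 * rhoL k.+1 = 0.
Proof.
move=> _ h1 h2 h3 h4.
have -> : cL K k.+1 = cL K k * ((1 - q ^- K * q ^+ k) * (1 - a ^+ 2 * q ^+ K.+1 * q ^+ k) /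
   ((1 - q * a * q ^+ k) * (1 - - (q * a) * q ^+ k) * (1 - t ^+ 2 * q ^+ k) * (1 - q * q ^+ k)) * q).
  by rewrite /cL !qpochSr !invfM (exprS q k); ring.
rewrite /S1.muL /S1.rhoL; move: h1 h2 h3 h4.
rewrite !(exprS q k) !(exprS q K); set Q := q ^+ k; set R := q ^+ K => h1 h2 h3 h4.
fld.
Qed.

Lemma EF K z : z != 0 ->
  (forall k, (k < K)%N -> [&& 1 - q * a * q ^+ k != 0, 1 - - (q * a) * q ^+ k != 0,
      1 - t ^+ 2 * q ^+ k != 0 & 1 - q * q ^+ k != 0]) ->
  Lop (FL K) z = PP z * (muL K * FL K z).
Proof.
move=> z0 H; rewrite /FL Lop_sum.
under eq_bigr do rewrite T1 //.
rewrite (eq_bigr (fun k : 'I_K.+1 => PP z * (cL K k * (muL k * phiL k z + rhoL k * phiL k.-1 z)))); last by move=> k _; ring.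
rewrite -mulr_sumr (telesc (cL K) muL rhoL (fun k => phiL k z)) //.
  by rewrite /S1.rhoL expr0 subrr mulr0.
by move=> k kK; case/and4P: (H k kK) => *; apply: condL.
Qed.


Definition dR n j := qpoch (q ^- (2 * n)) (q ^+ 2) j * qpoch (a ^+ 2 * q ^+ (2 * n).+3) (q ^+ 2) j /
  (qpoch (q ^+ 2 * a ^+ 2) (q ^+ 2) j * qpoch (t ^+ 2 * q ^+ 2) (q ^+ 2) j * qpoch (t ^+ 2 * q) (q ^+ 2) j
   * qpoch (q ^+ 2) (q ^+ 2) j) * (q ^+ 2) ^+ j.
Definition GR n z := \sum_(j < n.+1) dR n j * psiR j z.

Lemma condR n j : (j < n)%N -> 1 - q ^+ 2 * a ^+ 2 * (q ^+ 2) ^+ j != 0 ->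
  1 - t ^+ 2 * q ^+ 2 * (q ^+ 2) ^+ j != 0 ->
  1 - t ^+ 2 * q * (q ^+ 2) ^+ j != 0 -> 1 - q ^+ 2 * (q ^+ 2) ^+ j != 0 ->
  dR n j * (nuR j - nuR n) + dR n j.+1 * sigR j.+1 = 0.
Proof.
move=> _ h1 h2 h3 h4.
have -> : dR n j.+1 = dR n j * ((1 - q ^- (2 * n) * (q ^+ 2) ^+ j) * (1 - a ^+ 2 * q ^+ (2 * n).+3 * (q ^+ 2) ^+ j) /
   ((1 - q ^+ 2 * a ^+ 2 * (q ^+ 2) ^+ j) * (1 - t ^+ 2 * q ^+ 2 * (q ^+ 2) ^+ j) * (1 - t ^+ 2 * q * (q ^+ 2) ^+ j)
    * (1 - q ^+ 2 * (q ^+ 2) ^+ j)) * q ^+ 2).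
  by rewrite /dR !qpochSr !invfM (exprS (q ^+ 2) j); ring.
rewrite /S1.nuR /S1.sigR; move: h1 h2 h3 h4.
rewrite !(exprS (q ^+ 2) j) (exprS q (2 * n).+2) (exprS q (2 * n).+1) (exprS q (2 * n)) exprM.
set P := (q ^+ 2) ^+ j; set N := (q ^+ 2) ^+ n => h1 h2 h3 h4.
fld. all: by rewrite exprMn.
Qed.

Lemma EG n z : z != 0 ->
  (forall j, (j < n)%N -> [&& 1 - q ^+ 2 * a ^+ 2 * (q ^+ 2) ^+ j != 0,
  1 - t ^+ 2 * q ^+ 2 * (q ^+ 2) ^+ j != 0,
  1 - t ^+ 2 * q * (q ^+ 2) ^+ j != 0 & 1 - q ^+ 2 * (q ^+ 2) ^+ j != 0]) ->
  Lop (GR n) z = PP z * (nuR n * GR n z).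
Proof.
move=> z0 H; rewrite /GR Lop_sum.
under eq_bigr do rewrite T2 //.
rewrite (eq_bigr (fun k : 'I_n.+1 => PP z * (dR n k * (nuR k * psiR k z + sigR k * psiR k.-1 z)))); last by move=> k _; ring.
rewrite -mulr_sumr (telesc (dR n) nuR sigR (fun k => psiR k z)) //.
  by rewrite /S1.sigR expr0 subrr mulr0.
by move=> k kK; case/and4P: (H k kK) => *; apply: condR.
Qed.

End Tel.

End S2.
Import S2.

Module S3.

Ltac fld := first [ring | field; repeat (apply/andP; split); rewrite ?expf_neq0 //].

Section Fin.
Variable C : numClosedFieldType.
Variables (q t a : C).
Hypotheses (q0 : q != 0) (t0 : t != 0).
Local Notation Lop := (Lop C q t a).
Local Notation BB := (BB C q t a).
Local Notation DD := (DD C q t a).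
Local Notation PP := (PP C q).
Local Notation phiL := (phiL C q t).
Local Notation psiR := (psiR C q t).
Local Notation ww := (ww C).

Definition zn m := t * q ^+ m.

Lemma cancelB (b x y c d r : C) : b != 0 -> b * (x - c) + d = r -> b * (y - c) + d = r -> x = y.
Proof.
move=> b0 h1; rewrite -h1 => /addIr /(mulfI b0) /addIr; done.
Qed.

Lemma node_uniq (F G : C -> C) mu N :
 (forall m, (m <= N)%N -> Lop F (zn m) = PP (zn m) * (mu * F (zn m))) ->
 (forall m, (m <= N)%N -> Lop G (zn m) = PP (zn m) * (mu * G (zn m))) ->
 F (zn 0) = G (zn 0) ->
 (forall m, (m <= N)%N -> BB (zn m) != 0) ->
 forall m, (m <= N.+1)%N -> F (zn m) = G (zn m).
Proof.
move=> HF HG H0 HB.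
have qS m : q * zn m = zn m.+1 by rewrite /zn exprS; ring.
have qP m : zn m.+1 / q = zn m by rewrite /zn exprS mulrCA mulrAC divff // mul1r.
have D0 : DD (zn 0) = 0 by rewrite /S1.DD /zn expr0 mulr1; fld.
have key : forall m, (m <= N)%N -> F (zn m) = G (zn m) /\ F (zn m.+1) = G (zn m.+1).
  elim=> [|m IH] hm.
    split => //; have := HF 0%N hm; have := HG 0%N hm; rewrite /S1.Lop qS D0 !mul0r !addr0 -H0.
    move=> h1 h2; apply: (cancelB _ _ _ _ 0 _ (HB 0%N hm)); rewrite addr0; [exact: h2 | exact: h1].
  have [h1 h2] := IH (ltnW hm); split => //.
  have := HF m.+1 hm; have := HG m.+1 hm; rewrite /S1.Lop qS qP -h1 -h2.
  by move=> e1 e2; apply: (cancelB _ _ _ _ _ _ (HB _ hm) e2 e1).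
case=> [|m] hm; first exact: H0.
by case: (key m hm).
Qed.


Local Notation cL := (cL C q t a).
Local Notation FL := (FL C q t a).
Local Notation dR := (dR C q t a).
Local Notation GR := (GR C q t a).

Definition pphi k : {poly C} := \prod_(i < k) ((1 - (t * q ^+ i) ^+ 2)%:P - (t * q ^+ i) *: 'X).
Definition ppsi j : {poly C} :=
  \prod_(i < j) (((1 - t ^+ 2 * (q ^+ 2) ^+ i) ^+ 2)%:P - (t ^+ 2 * (q ^+ 2) ^+ i) *: 'X ^+ 2).

Lemma pphiE k z : z != 0 -> (pphi k).[ww z] = phiL k z.
Proof.
move=> z0; rewrite horner_prod /S1.phiL /qpoch -big_split /=; apply: eq_bigr => i _.
rewrite !hornerE /S1.ww; fld.
Qed.

Lemma psi_fac (s z : C) : z != 0 ->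
  (1 - t ^+ 2 / z ^+ 2 * s) * (1 - t ^+ 2 * z ^+ 2 * s) = (1 - t ^+ 2 * s) ^+ 2 - t ^+ 2 * s * (z^-1 - z) ^+ 2.
Proof. move=> z0; fld. Qed.

Lemma ppsiE j z : z != 0 -> psiR j z = ww z * (ppsi j).[ww z].
Proof.
move=> z0; rewrite horner_prod /S1.psiR /qpoch -big_split; congr (_ * _); apply: eq_bigr => i _.
rewrite hornerD hornerN hornerC hornerZ hornerXn /S1.ww; exact: psi_fac.
Qed.

Lemma size_pphi k : (size (pphi k) <= k.+1)%N.
Proof.
elim: k => [|k IH]; first by rewrite /pphi big_ord0 size_poly1.
rewrite /pphi big_ord_recr /= -/(pphi k); apply: leq_trans (size_polyMleq _ _) _.
have hf : (size ((1 - (t * q ^+ k) ^+ 2)%:P - (t * q ^+ k) *: 'X)%R <= 2)%N.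
  apply: leq_trans (size_polyD _ _) _; rewrite geq_max size_polyN.
  by rewrite (leq_trans (size_polyC_leq1 _)) // (leq_trans (size_scale_leq _ _)) // size_polyX.
have := leq_add IH hf; set x := (_ + _)%N; lia.
Qed.

Lemma size_ppsi j : (size (ppsi j) <= (2 * j).+1)%N.
Proof.
elim: j => [|j IH]; first by rewrite /ppsi big_ord0 size_poly1.
rewrite /ppsi big_ord_recr /= -/(ppsi j); apply: leq_trans (size_polyMleq _ _) _.
have hf : (size (((1 - t ^+ 2 * (q ^+ 2) ^+ j) ^+ 2)%:P - (t ^+ 2 * (q ^+ 2) ^+ j) *: 'X ^+ 2)%R <= 3)%N.
  apply: leq_trans (size_polyD _ _) _; rewrite geq_max size_polyN.
  by rewrite (leq_trans (size_polyC_leq1 _)) // (leq_trans (size_scale_leq _ _)) // size_polyXn.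
have := leq_add IH hf; set x := (_ + _)%N; lia.
Qed.

Definition PolyL K := \sum_(k < K.+1) cL K k *: pphi k.
Definition PolyR n := (t / (1 - t ^+ 2)) *: ('X * \sum_(j < n.+1) dR n j *: ppsi j).

Lemma PolyLE K z : z != 0 -> (PolyL K).[ww z] = FL K z.
Proof.
move=> z0; rewrite /PolyL /S2.FL horner_sum; apply: eq_bigr => k _.
by rewrite hornerZ pphiE.
Qed.

Lemma PolyRE n z : z != 0 -> (PolyR n).[ww z] = t / (1 - t ^+ 2) * GR n z.
Proof.
move=> z0; rewrite /PolyR /S2.GR hornerZ hornerM hornerX horner_sum mulr_sumr; congr (_ * _).
apply: eq_bigr => k _; rewrite hornerZ ppsiE //; ring.
Qed.

Lemma size_PolyL K : (size (PolyL K) <= K.+1)%N.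
Proof.
rewrite /PolyL; apply: (big_ind (fun p : {poly C} => (size p <= K.+1)%N)).
- by rewrite size_poly0.
- by move=> p1 p2 h1 h2; apply: leq_trans (size_polyD _ _) _; rewrite geq_max h1 h2.
move=> k _; apply: leq_trans (size_scale_leq _ _) _; apply: leq_trans (size_pphi k) _.
by rewrite ltnS -ltnS ltn_ord.
Qed.

Lemma size_PolyR n : (size (PolyR n) <= (2 * n).+2)%N.
Proof.
rewrite /PolyR; apply: leq_trans (size_scale_leq _ _) _.
apply: leq_trans (size_polyMleq _ _) _; rewrite size_polyX.
suff : (size (\sum_(j < n.+1) dR n j *: ppsi j)%R <= (2 * n).+1)%N by [].
apply: (big_ind (fun p : {poly C} => (size p <= (2 * n).+1)%N)).
- by rewrite size_poly0.
- by move=> p1 p2 h1 h2; apply: leq_trans (size_polyD _ _) _; rewrite geq_max h1 h2.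
move=> k _; apply: leq_trans (size_scale_leq _ _) _; apply: leq_trans (size_ppsi k) _.
have := ltn_ord k; lia.
Qed.


Local Notation muL := (muL C q a).
Local Notation nuR := (nuR C q a).

Lemma core n z : z != 0 ->
  (forall k, (k < (2 * n).+1)%N -> [&& 1 - q * a * q ^+ k != 0, 1 - - (q * a) * q ^+ k != 0,
      1 - t ^+ 2 * q ^+ k != 0 & 1 - q * q ^+ k != 0]) ->
  (forall j, (j < n)%N -> [&& 1 - q ^+ 2 * a ^+ 2 * (q ^+ 2) ^+ j != 0,
  1 - t ^+ 2 * q ^+ 2 * (q ^+ 2) ^+ j != 0,
  1 - t ^+ 2 * q * (q ^+ 2) ^+ j != 0 & 1 - q ^+ 2 * (q ^+ 2) ^+ j != 0]) ->
  (forall m, (m <= 2 * n)%N -> BB (zn m) != 0) ->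
  1 - t ^+ 2 != 0 ->
  uniq [seq ww (zn m) | m <- iota 0 (2 * n).+2] ->
  FL (2 * n).+1 z = t / (1 - t ^+ 2) * GR n z.
Proof.
move=> z0 HL HR HB t1 Hu.
set K := (2 * n).+1.
have zn0 m : zn m != 0 by rewrite /zn mulf_neq0 ?expf_neq0.
have Enu : nuR n = muL K.
  by rewrite /S1.nuR /S1.muL /K (exprS q (2 * n)) exprM; fld.
pose H z := t / (1 - t ^+ 2) * GR n z.
have EH : forall z, z != 0 -> Lop H z = PP z * (muL K * H z).
  move=> y y0; have E := EG C q t a q0 t0 n y y0 HR; rewrite /S1.Lop in E; rewrite /H /S1.Lop -Enu.
  transitivity (t / (1 - t ^+ 2) * (BB y * (GR n (q * y) - GR n y) + DD y * (GR n (y / q) - GR n y))).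
    ring.
  rewrite E; ring.
have EF' : forall z, z != 0 -> Lop (FL K) z = PP z * (muL K * FL K z).
  by move=> y y0; apply: EF.
have Hnodes : forall m, (m <= (2 * n).+1)%N -> FL K (zn m) = H (zn m).
  apply: (@node_uniq (FL K) H (muL K) (2 * n) (fun m _ => EF' _ (zn0 m)) (fun m _ => EH _ (zn0 m))) => //.
  rewrite /H /S2.FL /S2.GR big_ord_recl big1; last first.
    move=> k _; rewrite /S1.phiL (qpochSl C (t / zn 0) (t / zn 0 * q) q k) //.
    by rewrite /zn expr0 mulr1 divff // subrr !(mul0r, mulr0).
  rewrite big_ord_recl big1; last first.
    move=> k _; rewrite /S1.psiR (qpochSl C (t ^+ 2 / zn 0 ^+ 2) (t ^+ 2 / zn 0 ^+ 2 * q ^+ 2) (q ^+ 2) k) //.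
    by rewrite /zn expr0 mulr1 divff ?expf_neq0 // subrr !(mul0r, mulr0).
  rewrite /S2.cL /S2.dR /S1.phiL /S1.psiR /S1.ww /zn !qpoch0 !expr0 !mulr1 !addr0.
  fld.
have D0 : PolyL K - PolyR n = 0.
  apply: (roots_geq_poly_eq0 (rs := [seq ww (zn m) | m <- iota 0 (2 * n).+2])) => //.
  - apply/allP => x /mapP [m]; rewrite mem_iota add0n => hm ->.
    by rewrite /root hornerD hornerN PolyLE // PolyRE // Hnodes ?subrr.
  - rewrite size_map size_iota; apply: leq_trans (size_polyD _ _) _.
    by rewrite geq_max size_polyN size_PolyR (leq_trans (size_PolyL K)).
by move/eqP: D0; rewrite subr_eq0 => /eqP E; rewrite -PolyLE // E PolyRE.
Qed.

End Fin.

End S3.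
Import S3.

Module S4.

Ltac fld := first [ring | field; repeat (apply/andP; split); rewrite ?expf_neq0 //].

Section Main.
Variable C : numClosedFieldType.

Lemma qpow_lt (q : C) i j : 0 < q -> q < 1 -> (i < j)%N -> q ^+ j < q ^+ i.
Proof.
move=> q0 q1 ij; rewrite -(subnKC (ltnW ij)) exprD -[X in _ < X](mulr1 (q ^+ i)).
by rewrite ltr_pM2l ?exprn_gt0 // exprn_ilt1 ?ltW // subn_eq0 -ltnNge ij.
Qed.

Lemma neq_inv (x Q : C) : Q != 0 -> x != Q^-1 -> 1 - x * Q != 0.
Proof.
move=> Q0; apply: contra; rewrite subr_eq0 => /eqP h; apply/eqP.
by rewrite -[LHS](mulfK Q0) -h mul1r.
Qed.

Lemma pos_neq0 (y : C) : 0 < y -> 1 + y != 0.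
Proof. by move=> y0; rewrite lt0r_neq0 // addr_gt0 ?ltr01. Qed.

Lemma tq_neq1 (q : C) M i : 0 < q -> q < 1 -> (i < M.+1)%N -> 1 - (q ^+ M.+1)^-1 * q ^+ i != 0.
Proof.
move=> q0 q1 iM; have QM0 : q ^+ M.+1 != 0 by rewrite expf_neq0 // lt0r_neq0.
apply/negP; rewrite subr_eq0 => /eqP h.
have : q ^+ i = q ^+ M.+1.
  by apply: (mulfI (invr_neq0 QM0)); rewrite -h mulVf.
by move/eqP; rewrite gt_eqF // qpow_lt.
Qed.

End Main.


End S4.
Import S4.

Theorem mainTheorem8 (C : numClosedFieldType) (q : C) (M n : nat) (alpha z : C) :
  0 < q -> q < 1 -> (0 < M)%N -> (n <= M./2)%N ->
  (forall j : nat, q * alpha != q ^- j) ->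
  (forall j : nat, - (q * alpha) != q ^- j) ->
  (forall j : nat, q ^+ 2 * alpha ^+ 2 != q ^- j) ->
  z != 0 ->
  phi43 (q ^- (2 * n).+1) (alpha ^+ 2 * q ^+ (2 * n).+2)
        (sqrtC q ^- M.+1 / z) (- (sqrtC q ^- M.+1 * z))
        (q * alpha) (- (q * alpha)) (q ^- M.+1) q q (2 * n).+1
  = (sqrtC q ^- M.+1 / z - sqrtC q ^- M.+1 * z) / (1 - q ^- M.+1)
    * phi43 (q ^- (2 * n)) (alpha ^+ 2 * q ^+ (2 * n).+3)
            (q ^- M.+1 / z ^+ 2) (q ^- M.+1 * z ^+ 2)
            (q ^+ 2 * alpha ^+ 2) (q ^- M.-1) (q ^- M) (q ^+ 2) (q ^+ 2) n.
Proof.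
move=> qp q1 M0 nM h1 h2 h3 z0.
have n2M : (2 * n <= M)%N by move: nM; rewrite -divn2; lia.
have q0 : q != 0 by rewrite lt0r_neq0.
set t := sqrtC q ^- M.+1.
have tp : 0 < t by rewrite /t invr_gt0 exprn_gt0 // sqrtC_gt0.
have t0 : t != 0 by rewrite lt0r_neq0.
have ht2 : q ^- M.+1 = t ^+ 2 by rewrite /t exprVn exprAC sqrtCK.
have ht2' : t ^+ 2 = (q ^+ M.+1)^-1 by rewrite -ht2.
have hM1 : q ^- M.-1 = t ^+ 2 * q ^+ 2.
  by rewrite ht2'; case: M M0 {nM n2M ht2 ht2' t tp t0} => // M' _ /=; rewrite !exprS; fld.
have hM : q ^- M = t ^+ 2 * q.
  by rewrite ht2' exprS; fld.
have tq i : (i < M.+1)%N -> 1 - t ^+ 2 * q ^+ i != 0 by move=> iM; rewrite ht2' tq_neq1.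
have qpos m : 0 < q ^+ m by rewrite exprn_gt0.
have q1n m : 1 - q * q ^+ m != 0.
  by rewrite -exprS subr_eq0 eq_sym lt_eqF // exprn_ilt1 ?ltW.
have znp m : 0 < zn C q t m by rewrite /zn mulr_gt0.
have Hc := core C q t alpha q0 t0 n z z0.
have E := Hc _ _ _ _ _.
have -> : phi43 (q ^- (2 * n).+1) (alpha ^+ 2 * q ^+ (2 * n).+2) (t / z) (- (t * z))
        (q * alpha) (- (q * alpha)) (q ^- M.+1) q q (2 * n).+1 = FL C q t alpha (2 * n).+1 z.
  rewrite /phi43 /S2.FL ht2; apply: eq_bigr => k _; rewrite /S2.cL /S1.phiL; ring.
have -> : phi43 (q ^- (2 * n)) (alpha ^+ 2 * q ^+ (2 * n).+3) (q ^- M.+1 / z ^+ 2) (q ^- M.+1 * z ^+ 2)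
            (q ^+ 2 * alpha ^+ 2) (q ^- M.-1) (q ^- M) (q ^+ 2) (q ^+ 2) n =
          \sum_(j < n.+1) dR C q t alpha n j * (qpoch (t ^+ 2 / z ^+ 2) (q ^+ 2) j * qpoch (t ^+ 2 * z ^+ 2) (q ^+ 2) j).
  rewrite /phi43 ht2 hM1 hM; apply: eq_bigr => k _; rewrite /S2.dR; ring.
rewrite E.
  rewrite /S2.GR /S1.psiR /S1.ww ht2 !mulr_sumr; apply: eq_bigr => k _; ring.
- move=> k kK; apply/and4P; split.
  + by apply: neq_inv; rewrite ?expf_neq0.
  + by apply: neq_inv; rewrite ?expf_neq0.
  + by apply: tq; lia.
  + exact: q1n.
- move=> j jn; apply/and4P; split.
  + by apply: neq_inv; rewrite ?expf_neq0 // -exprM.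
  + by rewrite -mulrA -exprS -exprM; apply: tq; lia.
  + by rewrite -mulrA -exprM -exprS; apply: tq; lia.
  + rewrite -exprM (_ : q ^+ 2 * q ^+ (2 * j) = q * q ^+ (2 * j).+1); last by rewrite (exprS q (2 * j)) mulrA -expr2.
    exact: q1n.
- move=> m mn; rewrite /S1.BB /zn.
  rewrite !mulf_neq0 //.
  + rewrite (_ : alpha ^+ 2 * q ^+ 2 * (t * q ^+ m) ^+ 2 / t ^+ 2 = (q ^+ 2 * alpha ^+ 2) * q ^+ (2 * m)).
      by apply: neq_inv; rewrite ?expf_neq0.
    by rewrite mulnC exprM; fld.
  + rewrite (_ : 1 - t ^+ 2 * (t * q ^+ m) ^+ 2 = (1 - t ^+ 2 * q ^+ m) * (1 + t ^+ 2 * q ^+ m)); last by ring.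
    by rewrite mulf_neq0 ?tq ?pos_neq0 ?mulr_gt0 ?exprn_gt0 //; lia.
  + by rewrite pos_neq0 // divr_gt0 // exprn_gt0 // mulr_gt0.
- by have := tq 0%N isT; rewrite expr0 mulr1.
rewrite map_inj_uniq ?iota_uniq //.
have mono m l : (m < l)%N -> ww C (zn C q t m) < ww C (zn C q t l).
  move=> ml; rewrite /S1.ww ltrD //.
    by rewrite ltf_pV2 ?posrE // /zn ltr_pM2l // qpow_lt.
  by rewrite ltrN2 /zn ltr_pM2l // qpow_lt.
move=> m l e; case: (ltngtP m l) => // h.
  by move: (mono _ _ h); rewrite e ltxx.
by move: (mono _ _ h); rewrite e ltxx.
Qed.
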